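(* Let $\overline{\mathsf{M}}_s$ be a fine saturated sharp monoid, $r$ a positive integer, and let $\mathfrak X_s$, $\mathfrak X_{s_r}$, $V\subseteq V_r$, $\mathsf{PL}_r$ and $\nabla$ be as in the context. Let $\delta\in\mathbb Z^{V_r}$ be supported on $V$. Let $D,D'\in\mathbb Z^{V_r}$ and $\alpha_D,\alpha_{D'}\in\mathsf{PL}_r$ satisfy $rD=\delta+\nabla\alpha_D$ and $rD'=\delta+\nabla\alpha_{D'}$, with $\alpha_D$ and $\alpha_{D'}$ both vanishing on every vertex of $V$, and suppose $D$ is linearly equivalent to $D'$, i.e. $D'-D\in\nabla(\mathsf{PL}_r)$. Then there exists $\beta\in\mathsf{PL}_r$ vanishing on $V$ with $D'=D+\nabla\beta$.
   Context: $\mathfrak X_s$ is a finite connected graph (loops and multiple edges allowed) with vertex set $V$, each edge $e$ having a length $\ell(e)\in\overline{\mathsf{M}}_s\setminus\{0\}$. Let $\overline{\mathsf{M}}_{s_r}=\tfrac1r\overline{\mathsf{M}}_s\subseteq\overline{\mathsf{M}}_s^{\mathsf{gp}}\otimes\mathbb Q$. $\mathfrak X_{s_r}$ is obtained by subdividing each edge $e$ of $\mathfrak X_s$ into a chain of exactly $r$ edges of length $\ell(e)/r$; its vertex set is $V_r\supseteq V$. $\mathsf{PL}_r$ is the group of functions $\alpha\colon V_r\to\overline{\mathsf{M}}_{s_r}^{\mathsf{gp}}$ with integer slopes: for each edge of $\mathfrak X_{s_r}$ of length $\lambda$ from $u$ to $u'$ there is $k\in\mathbb Z$ with $\alpha(u')-\alpha(u)=k\lambda$.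 Divisors are elements of $\mathbb Z^{V_r}$, and $\nabla\alpha(v)$ is the sum of the outgoing slopes of $\alpha$ along all half-edges at $v$. *)

(* Defs.v *)
From HB Require Import structures.
From mathcomp Require Import all_boot all_order all_algebra.
Set Implicit Arguments. Unset Strict Implicit. Unset Printing Implicit Defensive.
Import Order.TTheory GRing.Theory Num.Theory.
Local Open Scope ring_scope.

(* The monoid M̄_s is realized (up to isomorphism, which is no loss of
   generality since a fine saturated sharp monoid embeds in some Z^n) as a
   subset M of Q^n = 'rV[rat]_n.  Then M^gp is the set of differences of
   elements of M, and M^gp ⊗ Q is its Q-span inside Q^n. *)

Definition Mgp (n : nat) (M : pred 'rV[rat]_n) (x : 'rV[rat]_n) : Prop :=
  exists a b, a \in M /\ b \in M /\ x = a - b.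

(* \bar M_{s_r}^gp = (1/r) M^gp inside M^gp ⊗ Q *)
Definition Mgp_r (n r : nat) (M : pred 'rV[rat]_n) (x : 'rV[rat]_n) : Prop :=
  exists y, Mgp M y /\ x = (r%:R)^-1 *: y.

Definition fs_sharp_monoid (n : nat) (M : pred 'rV[rat]_n) : Prop :=
  [/\ 0 \in M,
      (forall a b, a \in M -> b \in M -> a + b \in M),
      (exists gens : seq 'rV[rat]_n, forall x,
          x \in M <-> exists c : 'I_(size gens) -> nat,
                        x = \sum_(i < size gens) gens`_i *+ c i),
      (forall x, Mgp M x -> forall m : nat, (0 < m)%N -> x *+ m \in M -> x \in M)
    & (forall x, x \in M -> - x \in M -> x = 0)].

Section Graph.
Variables (V E : finType) (src tgt : E -> V).

Definition adj : rel V :=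
  fun u v => [exists e, ((src e == u) && (tgt e == v)) || ((src e == v) && (tgt e == u))].
Definition connected_graph : Prop := forall u v, connect adj u v.

Variable r : nat.

(* vertices of the r-subdivision: original vertices, plus r-1 interior
   points on each edge *)
Definition Vr : finType := (V + (E * 'I_r.-1))%type.

(* the i-th point (0 <= i <= r) along edge e, from src e to tgt e *)
Definition point (e : E) (i : nat) : Vr :=
  if i == 0%N then inl (src e)
  else if insub i.-1 is Some j then inr (e, j : 'I_r.-1)
  else inl (tgt e).

Definition Er : finType := (E * 'I_r)%type.
Definition etail (ed : Er) : Vr := point ed.1 ed.2.
Definition ehead (ed : Er) : Vr := point ed.1 (ed.2).+1.

Variables (n : nat) (M : pred 'rV[rat]_n) (len : E -> 'rV[rat]_n).

Definition lenr (ed : Er) : 'rV[rat]_n := (r%:R)^-1 *: len ed.1.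

Definition PL (a : Vr -> 'rV[rat]_n) : Prop :=
  (forall v, Mgp_r r M (a v)) /\
  (forall ed : Er, exists k : int, a (ehead ed) - a (etail ed) = k%:~R *: lenr ed).

(* the slope of a along ed (from tail to head): the unique rational q with
   a(head) - a(tail) = q * lenr ed when it exists (lenr ed <> 0); it is an
   integer for a \in PL, and we read it as such via numq. *)
Definition slope (a : Vr -> 'rV[rat]_n) (ed : Er) : int :=
  let d := a (ehead ed) - a (etail ed) in
  let l := lenr ed in
  numq ((\sum_(j < n) d ord0 j * l ord0 j) / (\sum_(j < n) l ord0 j ^+ 2)).

Definition nabla (a : Vr -> 'rV[rat]_n) (v : Vr) : int :=
  \sum_(ed : Er) ((if etail ed == v then slope a ed else 0)
                  + (if ehead ed == v then - slope a ed else 0)).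

End Graph.

(* Main.v *)
Require Import Defs.
From HB Require Import structures.
From mathcomp Require Import all_boot all_order all_algebra.
Import Order.TTheory GRing.Theory Num.Theory.
Local Open Scope ring_scope.
Set Implicit Arguments. Unset Strict Implicit.

Lemma slope_of (V E : finType) (src tgt : E -> V) (r n : nat) (len : E -> 'rV[rat]_n)
  (a : Vr V E r -> 'rV[rat]_n) (ed : Er E r) (k : int) :
  lenr len ed != 0 ->
  a (ehead src tgt ed) - a (etail src tgt ed) = k%:~R *: lenr len ed ->
  slope src tgt len a ed = k.
Proof.
move=> Hl Hd; rewrite /slope Hd.
set l := lenr len ed.
have -> : \sum_(j < n) (k%:~R *: l) ord0 j * l ord0 j = k%:~R * \sum_(j < n) l ord0 j ^+ 2.
  rewrite mulr_sumr; apply: eq_bigr => j _; by rewrite mxE -mulrA.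
have S0 : \sum_(j < n) l ord0 j ^+ 2 != 0.
  apply/negP => /eqP /psumr_eq0P H.
  move/negP: Hl; apply; apply/eqP/matrixP => i j.
  rewrite (ord1 i) [RHS]mxE. apply/eqP. rewrite -(sqrf_eq0 (l ord0 j)). apply/eqP/H => // ? _; exact: sqr_ge0.
by rewrite mulfK // numq_int.
Qed.

Lemma slope_ext (V E : finType) (src tgt : E -> V) (r n : nat) (len : E -> 'rV[rat]_n)
  (a b : Vr V E r -> 'rV[rat]_n) (ed : Er E r) :
  a (ehead src tgt ed) - a (etail src tgt ed) = b (ehead src tgt ed) - b (etail src tgt ed) ->
  slope src tgt len a ed = slope src tgt len b ed.
Proof. by move=> H; rewrite /slope H. Qed.

Lemma sum_fiber (I J : finType) (n : nat) (f : I -> J) (c : I -> int) (w : J -> 'rV[rat]_n) :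
  \sum_i (c i)%:~R *: w (f i) = \sum_j (\sum_i if f i == j then c i else 0)%:~R *: w j.
Proof.
have -> : \sum_j (\sum_i if f i == j then c i else 0)%:~R *: w j
   = \sum_j \sum_i (if f i == j then (c i)%:~R *: w j else 0).
  apply: eq_bigr => j _; rewrite rmorph_sum scaler_suml; apply: eq_bigr => i _.
  by case: ifP => _ //; rewrite scale0r.
rewrite exchange_big; apply: eq_bigr => i _.
rewrite -big_mkcond /=.
under eq_bigl do rewrite eq_sym.
by rewrite big_pred1_eq.
Qed.

Lemma sharp_sum (n : nat) (M : pred 'rV[rat]_n) (I : finType) (x : I -> 'rV[rat]_n) :
  0 \in M -> (forall a b, a \in M -> b \in M -> a + b \in M) ->
  (forall x, x \in M -> - x \in M -> x = 0) ->
  (forall i, x i \in M) -> \sum_i x i = 0 -> forall i, x i = 0.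
Proof.
move=> M0 MD Msh Hx Hs i.
move: Hs; rewrite (bigD1 i) //= => /eqP; rewrite addr_eq0 => /eqP Hi.
apply: Msh => //; rewrite Hi opprK.
by apply: (big_ind (fun y => y \in M)) => // j _; apply: Hx.
Qed.

Lemma mulrn_in (n : nat) (M : pred 'rV[rat]_n) (v : 'rV[rat]_n) (N : nat) :
  0 \in M -> (forall a b, a \in M -> b \in M -> a + b \in M) -> v \in M -> v *+ N \in M.
Proof. move=> M0 MD Hv; elim: N => [|N IH] //; rewrite mulrS; exact: MD. Qed.

Lemma Mgp_rB (n r : nat) (M : pred 'rV[rat]_n) x y :
  (forall a b, a \in M -> b \in M -> a + b \in M) ->
  Mgp_r r M x -> Mgp_r r M y -> Mgp_r r M (x - y).
Proof.
move=> MD [x' [[a1 [b1 [Ha1 [Hb1 ->]]]] ->]] [y' [[a2 [b2 [Ha2 [Hb2 ->]]]] ->]].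
exists ((a1 + b2) - (b1 + a2)); split.
  by exists (a1 + b2), (b1 + a2); split; [exact: MD|split; [exact: MD|]].
rewrite -scalerBr; congr (_ *: _).
by rewrite !opprD !opprK !addrA (addrAC a1 b2) (addrAC _ b2).
Qed.

Lemma sub3 (U : zmodType) (a1 b1 c1 a2 b2 c2 : U) :
  a1 - b1 - c1 - (a2 - b2 - c2) = a1 - a2 - (b1 - b2) - (c1 - c2).
Proof. rewrite -!addrA; congr (_ + _). rewrite !opprD !opprK.
by rewrite [in RHS]addrACA [in LHS]addrA addrCA.
Qed.

From mathcomp Require Import ring.

Theorem mainTheorem11
  (n : nat) (M : pred 'rV[rat]_n) (HM : fs_sharp_monoid M)
  (r : nat) (Hr : (0 < r)%N)
  (V E : finType) (src tgt : E -> V) (Hconn : connected_graph src tgt)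
  (len : E -> 'rV[rat]_n)
  (HlenM : forall e, len e \in M) (Hlen0 : forall e, len e != 0)
  (delta : Vr V E r -> int)
  (Hdelta : forall x : E * 'I_r.-1, delta (inr x) = 0)
  (D D' : Vr V E r -> int)
  (aD aD' : Vr V E r -> 'rV[rat]_n)
  (HaD : PL src tgt M len aD) (HaD' : PL src tgt M len aD')
  (HrD : forall v, (r%:Z * D v = delta v + nabla src tgt len aD v)%R)
  (HrD' : forall v, (r%:Z * D' v = delta v + nabla src tgt len aD' v)%R)
  (HaD0 : forall v : V, aD (inl v) = 0)
  (HaD'0 : forall v : V, aD' (inl v) = 0)
  (Hlin : exists g, PL src tgt M len g /\ forall v, D' v - D v = nabla src tgt len g v) :
  exists b : Vr V E r -> 'rV[rat]_n,
    [/\ PL src tgt M len b, (forall v : V, b (inl v) = 0)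
      & forall v, D' v = D v + nabla src tgt len b v].
Proof.
case: HM => M0 MD _ _ Msh.
case: Hlin => g [[Hgv Hgs] Hg].
case: HaD => _ HaDs; case: HaD' => _ HaD's.
have Hl : forall ed : Er E r, lenr len ed != 0.
  move=> ed; rewrite /lenr scaler_eq0 negb_or invr_eq0 pnatr_eq0 -lt0n Hr /=; exact: Hlen0.
have Hsl : forall a : Vr V E r -> 'rV[rat]_n,
    (forall ed : Er E r, exists k : int, a (ehead src tgt ed) - a (etail src tgt ed) = k%:~R *: lenr len ed) ->
    forall ed, a (ehead src tgt ed) - a (etail src tgt ed) = (slope src tgt len a ed)%:~R *: lenr len ed.
  move=> a Ha ed; case: (Ha ed) => k Hk; by rewrite (slope_of (Hl ed) Hk).
pose kD := slope src tgt len aD; pose kD' := slope src tgt len aD'; pose kg := slope src tgt len g.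
pose m ed := kD' ed - kD ed - r%:Z * kg ed.
pose h v := aD' v - aD v - r%:R *: g v.
have Hh : forall ed, h (ehead src tgt ed) - h (etail src tgt ed) = (m ed)%:~R *: lenr len ed.
  move=> ed.
  have -> : h (ehead src tgt ed) - h (etail src tgt ed) =
     (aD' (ehead src tgt ed) - aD' (etail src tgt ed)) - (aD (ehead src tgt ed) - aD (etail src tgt ed))
     - r%:R *: (g (ehead src tgt ed) - g (etail src tgt ed)).
    by rewrite /h scalerBr sub3.
  rewrite (Hsl _ HaD's) (Hsl _ HaDs) (Hsl _ Hgs) (scalerA (r%:R)) -!scalerBl /m.
  congr (_ *: _); rewrite !rmorphB /= rmorphM /=; congr (_ - _).
have Hdiv : forall v, \sum_(ed : Er E r) (if etail src tgt ed == v then m ed else 0)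
     = \sum_(ed : Er E r) (if ehead src tgt ed == v then m ed else 0).
  move=> v; apply/eqP; rewrite -subr_eq0; apply/eqP.
  have -> : \sum_(ed : Er E r) (if etail src tgt ed == v then m ed else 0)
     - \sum_(ed : Er E r) (if ehead src tgt ed == v then m ed else 0)
     = nabla src tgt len aD' v - nabla src tgt len aD v - r%:Z * nabla src tgt len g v.
    rewrite /nabla mulr_sumr -!sumrB; apply: eq_bigr => ed _; rewrite /m /kD /kD' /kg.
    by case: (etail src tgt ed == v); case: (ehead src tgt ed == v); ring.
  have N1 : nabla src tgt len aD' v = r%:Z * D' v - delta v by rewrite HrD' addrC addKr.
  have N2 : nabla src tgt len aD v = r%:Z * D v - delta v by rewrite HrD addrC addKr.
  rewrite N1 N2 -Hg; ring.
have Hen : \sum_(ed : Er E r) (m ed * m ed)%:~R *: len ed.1 = 0.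
  have H0 : \sum_(ed : Er E r) (m ed)%:~R *: (h (ehead src tgt ed) - h (etail src tgt ed)) = 0.
    under eq_bigr do rewrite scalerBr.
    rewrite sumrB (sum_fiber (fun ed => ehead src tgt ed) m h) (sum_fiber (fun ed => etail src tgt ed) m h).
    rewrite -sumrB big1 // => v _ /=; by rewrite Hdiv subrr.
  rewrite -[RHS](scaler0 _ (r%:R : rat)) -[in RHS]H0 scaler_sumr; apply: eq_bigr => ed _.
  by rewrite Hh /lenr !scalerA rmorphM /= [in RHS]mulrC [in RHS]mulrA mulVf ?mul1r // pnatr_eq0 -lt0n.
have Hsq : forall z : int, exists N : nat, z * z = Posz N.
  case=> k; first by exists (k * k)%N.
  by exists (k.+1 * k.+1)%N; rewrite NegzE mulrNN.
have Hm0 : forall ed, m ed = 0.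
  move=> ed.
  have Hin : forall i : Er E r, (m i * m i)%:~R *: len i.1 \in M.
    move=> i; case: (Hsq (m i)) => N ->.
    change ((N%:R : rat) *: len i.1 \in M); rewrite scaler_nat; exact: mulrn_in.
  have := sharp_sum M0 MD Msh Hin Hen ed => /eqP.
  by rewrite scaler_eq0 (negbTE (Hlen0 _)) orbF intr_eq0 mulf_eq0 orbb => /eqP.
have Hhe : forall ed, h (ehead src tgt ed) = h (etail src tgt ed).
  by move=> ed; apply/eqP; rewrite -subr_eq0 Hh Hm0 scale0r.
have Hch : forall e (i : nat), (i <= r)%N -> h (point src tgt r e i) = h (inl (src e)).
  move=> e; elim=> [|i IH] Hi; first by rewrite /point.
  have Hir : (i < r)%N := Hi.
  have := Hhe (e, Ordinal Hir); rewrite /ehead /etail /= => ->.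
  apply: IH; exact: ltnW.
have Hrep : forall v, exists u : V, h v = h (inl u).
  case=> [u | [e j]]; first by exists u.
  exists (src e); rewrite -(Hch e j.+1); last exact: leq_trans (ltn_ord j) (leq_pred r).
  by rewrite /point /= valK.
have Hr0 : (r%:R : rat) != 0 by rewrite pnatr_eq0 -lt0n.
pose b v := (r%:R : rat)^-1 *: (aD' v - aD v).
have Hb : forall v, b v = (r%:R : rat)^-1 *: h v + g v.
  by move=> v; rewrite /b /h [in RHS]scalerBr scalerA mulVf // scale1r subrK.
have Hbd : forall ed, b (ehead src tgt ed) - b (etail src tgt ed) = g (ehead src tgt ed) - g (etail src tgt ed).
  by move=> ed; rewrite !Hb Hhe opprD addrACA subrr add0r.
exists b; split.
- split.
  + move=> v; case: (Hrep v) => u Hu.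
    rewrite Hb Hu /h HaD0 HaD'0 subrr sub0r scalerN scalerA mulVf // scale1r addrC.
    exact: Mgp_rB.
  + by move=> ed; rewrite Hbd; exact: Hgs.
- by move=> u; rewrite /b HaD0 HaD'0 subrr scaler0.
- move=> v.
  have -> : nabla src tgt len b v = nabla src tgt len g v.
    by rewrite /nabla; apply: eq_bigr => ed _; rewrite (slope_ext _ (Hbd ed)).
  by rewrite -Hg addrC subrK.
Qed.
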